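(* Let $(u_1,\ldots,u_k)$ be the Frenet $k$-frame of a sequence $\{x_i\}$ in $\mathbb R^n$ converging to $x$. Suppose a simplex $T\subseteq\mathbb R^n$ contains every $x_i$. Then there exist $\lambda_1,\ldots,\lambda_k>0$ such that $T$ contains the simplex $\operatorname{conv}(x,x+\lambda_1u_1,\ldots,x+\lambda_1u_1+\cdots+\lambda_ku_k)$.
   Context: For $y\in\mathbb R^n$ and a linear subspace $L$, $\mathsf{proj}_L(y)$ is the orthogonal projection of $y$ onto $L$. Frenet frame of a sequence: let $\sigma=\{x_i\}$ converge to $x$ and let $(u_1,\ldots,u_k)$ be pairwise orthogonal unit vectors. $u_1$ is the Frenet $1$-frame of $\sigma$ if $x_i\ne x$ for all $i$ and $u_1=\lim_{i}(x_i-x)/\|x_i-x\|$. $(u_1,\ldots,u_k)$ is the Frenet $k$-frame of $\sigma$ if $(u_1,\ldots,u_{k-1})$ is its Frenet $(k-1)$-frame and $u_k=\lim_{i}\frac{x_i-x-\mathsf{proj}_{\mathbb Ru_1+\cdots+\mathbb Ru_{k-1}}(x_i-x)}{\|x_i-x-\mathsf{proj}_{\mathbb Ru_1+\cdots+\mathbb Ru_{k-1}}(x_i-x)\|}$, with all denominators nonzero. *)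

(* Defs.v *)
From Stdlib Require Import Reals Lra Lia.
Open Scope R_scope.

(* A point of R^n is represented by a function nat -> R; only coordinates
   t < n are meaningful (all notions below only look at those). *)
Definition vec := nat -> R.

Fixpoint rsum (f : nat -> R) (m : nat) : R :=
  match m with
  | O => 0
  | S m' => rsum f m' + f m'
  end.

Definition vadd (a b : vec) : vec := fun t => a t + b t.
Definition vsub (a b : vec) : vec := fun t => a t - b t.
Definition vscale (c : R) (a : vec) : vec := fun t => c * a t.

Definition dot (n : nat) (a b : vec) : R := rsum (fun t => a t * b t) n.
Definition norm (n : nat) (a : vec) : R := sqrt (dot n a a).

Definition veq (n : nat) (a b : vec) : Prop := forall t, (t < n)%nat -> a t = b t.

Definition vconv (n : nat) (xs : nat -> vec) (l : vec) : Prop :=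
  Un_cv (fun i => norm n (vsub (xs i) l)) 0.

Definition orthonormal (n : nat) (u : nat -> vec) (k : nat) : Prop :=
  forall j l, (1 <= j <= k)%nat -> (1 <= l <= k)%nat ->
    dot n (u j) (u l) = if Nat.eqb j l then 1 else 0.

(* orthogonal projection of y onto R u_1 + ... + R u_m
   (for orthonormal u_1..u_m this is sum_j <y,u_j> u_j) *)
Definition proj (n : nat) (u : nat -> vec) (m : nat) (y : vec) : vec :=
  fun t => rsum (fun j => dot n y (u (S j)) * u (S j) t) m.

Definition resid (n : nat) (xs : nat -> vec) (x : vec) (u : nat -> vec)
  (m : nat) (i : nat) : vec :=
  vsub (vsub (xs i) x) (proj n u m (vsub (xs i) x)).

(* The step condition defining u_j:  all denominators nonzero and
   u_j = lim_i resid_i / |resid_i| ; for j = 1 this is exactly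
   "x_i <> x for all i and u_1 = lim (x_i - x)/|x_i - x|". *)
Definition frenet_step (n : nat) (xs : nat -> vec) (x : vec) (u : nat -> vec)
  (j : nat) : Prop :=
  (forall i, norm n (resid n xs x u (j - 1) i) <> 0) /\
  vconv n (fun i => vscale (/ norm n (resid n xs x u (j - 1) i))
                           (resid n xs x u (j - 1) i)) (u j).

Fixpoint frenet_rec (n : nat) (xs : nat -> vec) (x : vec) (u : nat -> vec)
  (k : nat) : Prop :=
  match k with
  | O => True
  | S k' => frenet_rec n xs x u k' /\ frenet_step n xs x u (S k')
  end.

Definition frenet_frame (n : nat) (xs : nat -> vec) (x : vec) (u : nat -> vec)
  (k : nat) : Prop :=
  orthonormal n u k /\ frenet_rec n xs x u k.

Definition in_conv (n : nat) (m : nat) (p : nat -> vec) (y : vec) : Prop :=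
  exists c : nat -> R,
    (forall j, (j <= m)%nat -> 0 <= c j) /\
    rsum c (S m) = 1 /\
    veq n y (fun t => rsum (fun j => c j * p j t) (S m)).

Definition aff_indep (n : nat) (m : nat) (p : nat -> vec) : Prop :=
  forall c : nat -> R,
    rsum c (S m) = 0 ->
    veq n (fun t => rsum (fun j => c j * p j t) (S m)) (fun _ => 0) ->
    forall j, (j <= m)%nat -> c j = 0.

Definition is_simplex (n : nat) (T : vec -> Prop) : Prop :=
  exists (m : nat) (v : nat -> vec),
    aff_indep n m v /\ forall y, T y <-> in_conv n m v y.

Definition frame_vertices (x : vec) (lam : nat -> R) (u : nat -> vec) : nat -> vec :=
  fun j => fun t => x t + rsum (fun l => lam (S l) * u (S l) t) j.

(* Main.v *)
Require Import Defs.
From Stdlib Require Import Reals Lra Lia.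
Open Scope R_scope.

Lemma rsum_ext f g m : (forall i, (i < m)%nat -> f i = g i) -> rsum f m = rsum g m.
Proof. induction m; simpl; intros H; auto. rewrite IHm by (intros; apply H; lia). rewrite H by lia. auto. Qed.

Lemma rsum_plus f g m : rsum (fun i => f i + g i) m = rsum f m + rsum g m.
Proof. induction m; simpl; [lra|]. rewrite IHm; lra. Qed.

Lemma rsum_scal c f m : rsum (fun i => c * f i) m = c * rsum f m.
Proof. induction m; simpl; [lra|]. rewrite IHm; lra. Qed.

Lemma rsum_scal_r c f m : rsum (fun i => f i * c) m = rsum f m * c.
Proof. induction m; simpl; [lra|]. rewrite IHm; lra. Qed.

Lemma rsum_zero m : rsum (fun _ => 0) m = 0.
Proof. induction m; simpl; [lra|]. rewrite IHm; lra. Qed.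

Lemma rsum_zero' f m : (forall i, (i < m)%nat -> f i = 0) -> rsum f m = 0.
Proof. intros H; rewrite (rsum_ext f (fun _ => 0)) by auto; apply rsum_zero. Qed.

Lemma rsum_shift f m : rsum f (S m) = f 0%nat + rsum (fun i => f (S i)) m.
Proof. induction m; simpl in *; [lra|]. rewrite IHm; lra. Qed.

Lemma rsum_swap F a b :
  rsum (fun i => rsum (fun j => F i j) b) a = rsum (fun j => rsum (fun i => F i j) a) b.
Proof. induction a; simpl. - rewrite rsum_zero; auto.
 - rewrite IHa. rewrite <- rsum_plus. auto. Qed.

Lemma rsum_nonneg f m : (forall i, (i < m)%nat -> 0 <= f i) -> 0 <= rsum f m.
Proof. induction m; simpl; intros H; [lra|]. pose proof (H m ltac:(lia)). pose proof (IHm ltac:(intros; apply H; lia)). lra. Qed.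

Lemma rsum_le f g m : (forall i, (i < m)%nat -> f i <= g i) -> rsum f m <= rsum g m.
Proof. induction m; simpl; intros H; [lra|]. pose proof (H m ltac:(lia)). pose proof (IHm ltac:(intros; apply H; lia)). lra. Qed.

Lemma rsum_abs f m : Rabs (rsum f m) <= rsum (fun i => Rabs (f i)) m.
Proof. induction m; simpl. rewrite Rabs_R0; lra.
  eapply Rle_trans. apply Rabs_triang. lra. Qed.

Lemma rsum_term_le f m t : (forall i, (i < m)%nat -> 0 <= f i) -> (t < m)%nat -> f t <= rsum f m.
Proof. induction m; intros H Ht; [lia|]. simpl. destruct (Nat.eq_dec t m).
 - subst. pose proof (rsum_nonneg f m ltac:(intros; apply H; lia)). lra.
 - pose proof (IHm ltac:(intros; apply H; lia) ltac:(lia)). pose proof (H m ltac:(lia)). lra. Qed.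

Lemma rsum_delta f m j : (j < m)%nat ->
  rsum (fun l => f l * (if Nat.eqb j l then 1 else 0)) m = f j.
Proof. induction m; intros H; [lia|]. simpl. destruct (Nat.eq_dec j m).
 - subst. rewrite Nat.eqb_refl. rewrite rsum_zero'. lra.
   intros i Hi. destruct (Nat.eqb_spec m i); [lia|lra].
 - rewrite IHm by lia. destruct (Nat.eqb_spec j m); [lia|lra]. Qed.

Lemma rsum_delta_r f m l : (l < m)%nat ->
  rsum (fun j => (if Nat.eqb j l then 1 else 0) * f j) m = f l.
Proof. intros H. rewrite <- (rsum_delta f m l H). apply rsum_ext. intros i _.
  rewrite Nat.eqb_sym. lra. Qed.

Lemma dot_comm n a b : dot n a b = dot n b a.
Proof. unfold dot. apply rsum_ext. intros; lra. Qed.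

Lemma dot_ext_l n a a' b : (forall t, (t < n)%nat -> a t = a' t) -> dot n a b = dot n a' b.
Proof. intros H; unfold dot; apply rsum_ext; intros; rewrite H; auto. Qed.

Lemma dot_ext_r n a b b' : (forall t, (t < n)%nat -> b t = b' t) -> dot n a b = dot n a b'.
Proof. intros H; unfold dot; apply rsum_ext; intros; rewrite H; auto. Qed.

Lemma dot_lin_l n p q a b c :
  dot n (fun t => p * a t + q * b t) c = p * dot n a c + q * dot n b c.
Proof. unfold dot. rewrite <- !rsum_scal, <- rsum_plus. apply rsum_ext; intros; ring. Qed.

Lemma dot_lin_r n p q a b c :
  dot n c (fun t => p * a t + q * b t) = p * dot n c a + q * dot n c b.
Proof. rewrite dot_comm, dot_lin_l, (dot_comm n a), (dot_comm n b). auto. Qed.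

Lemma dot_rsum_l n c w m z :
  dot n (fun t => rsum (fun j => c j * w j t) m) z = rsum (fun j => c j * dot n (w j) z) m.
Proof. unfold dot.
  rewrite (rsum_ext _ (fun t => rsum (fun j => c j * w j t * z t) m)).
  2:{ intros; rewrite <- rsum_scal_r; auto. }
  rewrite rsum_swap. apply rsum_ext; intros. rewrite <- rsum_scal. apply rsum_ext; intros; ring. Qed.

Lemma dot_rsum_r n c w m z :
  dot n z (fun t => rsum (fun j => c j * w j t) m) = rsum (fun j => c j * dot n z (w j)) m.
Proof. rewrite dot_comm, dot_rsum_l. apply rsum_ext; intros; rewrite dot_comm; auto. Qed.

Lemma dot_nonneg n a : 0 <= dot n a a.
Proof. apply rsum_nonneg; intros; nra. Qed.

Lemma dot_zero n a : dot n a a = 0 -> forall t, (t < n)%nat -> a t = 0.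
Proof. intros H t Ht. pose proof (rsum_term_le (fun t => a t * a t) n t ltac:(intros; nra) Ht).
  unfold dot in H. nra. Qed.

Lemma coord_le_norm n a t : (t < n)%nat -> Rabs (a t) <= norm n a.
Proof. intros Ht. unfold norm. rewrite <- sqrt_Rsqr_abs. apply sqrt_le_1_alt.
  unfold Rsqr. apply (rsum_term_le (fun t => a t * a t)); auto. intros; nra. Qed.

Lemma dot_bound n g v : Rabs (dot n g v) <= rsum (fun t => Rabs (g t)) n * norm n v.
Proof. unfold dot at 1. eapply Rle_trans. apply rsum_abs. rewrite <- rsum_scal_r.
  apply rsum_le. intros i Hi. rewrite Rabs_mult. apply Rmult_le_compat_l. apply Rabs_pos.
  apply coord_le_norm; auto. Qed.
Lemma dot_sub_r n g a b : dot n g (vsub a b) = dot n g a - dot n g b.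
Proof. rewrite (dot_ext_r n g (vsub a b) (fun t => 1 * a t + (-1) * b t)).
  rewrite dot_lin_r; ring. intros; unfold vsub; ring. Qed.

Lemma dot_limit n g z u : vconv n z u -> Un_cv (fun i => dot n g (z i)) (dot n g u).
Proof. unfold vconv, Un_cv. intros H eps Heps.
  set (S := rsum (fun t => Rabs (g t)) n).
  assert (HS : 0 <= S) by (apply rsum_nonneg; intros; apply Rabs_pos).
  destruct (H (eps / (S + 1))) as [N HN]. apply Rdiv_lt_0_compat; lra.
  exists N. intros i Hi. specialize (HN i Hi). unfold R_dist in *.
  rewrite Rminus_0_r in HN. rewrite Rabs_pos_eq in HN by apply sqrt_pos.
  rewrite <- dot_sub_r. eapply Rle_lt_trans. apply dot_bound. fold S.
  apply Rle_lt_trans with (S * (eps / (S+1))). apply Rmult_le_compat_l; lra.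
  assert (0 < eps / (S+1)) by (apply Rdiv_lt_0_compat; lra).
  apply Rlt_le_trans with ((S+1) * (eps / (S+1))). nra.
  right; field; lra. Qed.

Lemma lim_nonneg s l : Un_cv s l -> (forall i, 0 <= s i) -> 0 <= l.
Proof. intros H Hs. destruct (Rle_lt_dec 0 l); auto.
  destruct (H (- l)) as [N HN]; [lra|]. specialize (HN N (le_n _)). specialize (Hs N).
  unfold R_dist in HN. rewrite Rabs_pos_eq in HN by lra. lra. Qed.

Definition affine (n : nat) (phi : vec -> R) : Prop :=
  exists g h, forall y, phi y = dot n g y + h.

Definition hrep (n : nat) (P : vec -> Prop) : Prop :=
  exists N (phi : nat -> vec -> R), (forall q, (q < N)%nat -> affine n (phi q)) /\
    forall y, P y <-> forall q, (q < N)%nat -> 0 <= phi q y.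

Lemma hrep_ext n P Q : (forall y, P y <-> Q y) -> hrep n P -> hrep n Q.
Proof. intros H [N [phi [H1 H2]]]. exists N, phi. split; auto. intros y; rewrite <- H; auto. Qed.

Lemma hrep_true n : hrep n (fun _ => True).
Proof. exists 0%nat, (fun _ _ => 0). split. intros; lia. intros; split; intros; auto; lia. Qed.

Lemma hrep_and n P Q : hrep n P -> hrep n Q -> hrep n (fun y => P y /\ Q y).
Proof. intros [N1 [p1 [A1 B1]]] [N2 [p2 [A2 B2]]].
  exists (N1 + N2)%nat, (fun q => if Nat.ltb q N1 then p1 q else p2 (q - N1)%nat). split.
  - intros q Hq. destruct (Nat.ltb_spec q N1). apply A1; auto. apply A2; lia.
  - intros y. rewrite B1, B2. split.
    + intros [H1 H2] q Hq. destruct (Nat.ltb_spec q N1). apply H1; auto. apply H2; lia.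
    + intros H. split.
      * intros q Hq. specialize (H q ltac:(lia)). destruct (Nat.ltb_spec q N1); auto; lia.
      * intros q Hq. specialize (H (q + N1)%nat ltac:(lia)). destruct (Nat.ltb_spec (q+N1) N1); [lia|].
        replace (q + N1 - N1)%nat with q in H by lia. auto. Qed.

Lemma hrep_single n phi : affine n phi -> hrep n (fun y => 0 <= phi y).
Proof. intros A. exists 1%nat, (fun _ => phi). split. intros; auto.
  intros y; split. intros; auto. intros H; apply (H 0%nat); lia. Qed.

Lemma affine_scal n c phi : affine n phi -> affine n (fun y => c * phi y).
Proof. intros [g [h H]]. exists (fun t => c * g t + 0 * g t), (c * h). intros y.
  rewrite dot_lin_l, H. ring. Qed.

Lemma affine_plus n phi psi : affine n phi -> affine n psi -> affine n (fun y => phi y + psi y).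
Proof. intros [g [h H]] [g' [h' H']]. exists (fun t => 1 * g t + 1 * g' t), (h + h'). intros y.
  rewrite dot_lin_l, H, H'. ring. Qed.

Lemma affine_const n c : affine n (fun _ => c).
Proof. exists (fun _ => 0), c. intros y. unfold dot. rewrite rsum_zero'. ring. intros; ring. Qed.

Lemma affine_dot n a : affine n (fun y => dot n a y).
Proof. exists a, 0. intros; ring. Qed.

Lemma affine_ext n phi psi : (forall y, phi y = psi y) -> affine n phi -> affine n psi.
Proof. intros E [g [h H]]. exists g, h. intros; rewrite <- E; auto. Qed.

Lemma affine_rsum n phi m : (forall j, (j < m)%nat -> affine n (phi j)) ->
  affine n (fun y => rsum (fun j => phi j y) m).
Proof. induction m; intros H; simpl. apply affine_const.
  apply affine_plus. apply IHm; intros; apply H; lia. apply H; lia. Qed.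

Lemma affine_coord n t : (t < n)%nat -> affine n (fun y => y t).
Proof. intros Ht. exists (fun s => if Nat.eqb t s then 1 else 0), 0. intros y. unfold dot.
  rewrite (rsum_ext _ (fun s => y s * (if Nat.eqb t s then 1 else 0))).
  rewrite rsum_delta; auto; ring. intros; ring. Qed.

Lemma hrep_eq n phi : affine n phi -> hrep n (fun y => phi y = 0).
Proof. intros A. eapply hrep_ext. 2: apply (hrep_and n _ _ (hrep_single n _ A) (hrep_single n _ (affine_scal n (-1) _ A))).
  intros y; simpl; split; intros; lra. Qed.

Lemma hrep_forall n (P : nat -> vec -> Prop) M : (forall i, (i < M)%nat -> hrep n (P i)) ->
  hrep n (fun y => forall i, (i < M)%nat -> P i y).
Proof. induction M; intros H.
  - eapply hrep_ext. 2: apply hrep_true. intros; split; auto; intros; lia.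
  - eapply hrep_ext. 2: apply (hrep_and n _ _ (IHM ltac:(intros; apply H; lia)) (H M ltac:(lia))).
    intros y; simpl; split. intros [H1 H2] i Hi. destruct (Nat.eq_dec i M). subst; auto. apply H1; lia.
    intros H1; split; auto. Qed.
Definition Pm (n : nat) (a : nat -> vec) (w : nat -> vec) (m : nat) (y : vec) : vec :=
  fun t => rsum (fun j => dot n (a j) y * w j t) m.

Definition lin_indep (n m : nat) (w : nat -> vec) : Prop :=
  forall c, (forall t, (t < n)%nat -> rsum (fun l => c l * w l t) m = 0) ->
    forall l, (l < m)%nat -> c l = 0.

Lemma lin_indep_S n m w : lin_indep n (S m) w -> lin_indep n m w.
Proof. intros H c Hc l Hl.
  assert (E : forall t, (t < n)%nat -> rsum (fun l => (if Nat.ltb l m then c l else 0) * w l t) (S m) = 0).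
  { intros t Ht. simpl. rewrite Nat.ltb_irrefl. 
    rewrite (rsum_ext _ (fun l => c l * w l t)). rewrite (Hc t Ht). ring.
    intros i Hi; destruct (Nat.ltb_spec i m); [auto|lia]. }
  specialize (H _ E l ltac:(lia)). simpl in H. destruct (Nat.ltb_spec l m); [exact H | lia]. Qed.

Lemma dot_minus_scal_l n f c g z : dot n (fun t => f t - c * g t) z = dot n f z - c * dot n g z.
Proof. rewrite (dot_ext_l n _ (fun t => 1 * f t + (-c) * g t)). rewrite dot_lin_l; ring.
  intros; ring. Qed.

Lemma dot_div_l n g c z : dot n (fun t => g t / c) z = dot n g z / c.
Proof. rewrite (dot_ext_l n _ (fun t => (/c) * g t + 0 * g t)). rewrite dot_lin_l; unfold Rdiv; ring.
  intros; unfold Rdiv; ring. Qed.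

Lemma dual_basis n w m : lin_indep n m w -> exists a : nat -> vec,
  (forall j l, (j < m)%nat -> (l < m)%nat -> dot n (a j) (w l) = if Nat.eqb j l then 1 else 0) /\
  (forall y z, dot n (Pm n a w m y) z = dot n y (Pm n a w m z)).
Proof. induction m; intros Hind.
  - exists (fun _ _ => 0). split. intros; lia. intros y z. unfold Pm; simpl.
    unfold dot. rewrite !rsum_zero'; auto; intros; ring.
  - destruct (IHm (lin_indep_S _ _ _ Hind)) as [a [Hbi Hsym]].
    set (P := Pm n a w m).
    assert (Pw : forall l, (l < m)%nat -> forall t, P (w l) t = w l t).
    { intros l Hl t. unfold P, Pm. rewrite <- (rsum_delta_r (fun j => w j t) m l Hl).
      apply rsum_ext. intros j Hj. rewrite Hbi; auto. }
    set (b := fun t => w m t - 1 * P (w m) t).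
    assert (bw : forall l, (l < m)%nat -> dot n b (w l) = 0).
    { intros l Hl. unfold b. rewrite dot_minus_scal_l. rewrite Hsym.
      rewrite (dot_ext_r n _ (P (w l)) (w l)). ring. intros; apply Pw; auto. }
    assert (bP : forall y, dot n b (P y) = 0).
    { intros y. unfold P, Pm. rewrite dot_rsum_r. apply rsum_zero'. intros j Hj.
      rewrite bw; auto; ring. }
    assert (bwm : dot n b (w m) = dot n b b).
    { rewrite (dot_ext_r n b (w m) (fun t => 1 * b t + 1 * P (w m) t)).
      rewrite dot_lin_r, bP; ring. intros; unfold b; ring. }
    assert (bpos : 0 < dot n b b).
    { destruct (dot_nonneg n b) as [|E]; auto. exfalso.
      pose proof (dot_zero n b (eq_sym E)) as Hb.
      specialize (Hind (fun l => if Nat.ltb l m then - dot n (a l) (w m) else 1)).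
      assert (1 = 0); [|lra].
      rewrite <- (Hind ltac:(intros t Ht; simpl; rewrite Nat.ltb_irrefl;
          rewrite <- (Hb t Ht); unfold b, P, Pm;
          rewrite (rsum_ext _ (fun l => (-1) * (dot n (a l) (w m) * w l t)));
          [rewrite rsum_scal; ring | intros i Hi; destruct (Nat.ltb_spec i m); [ring|lia]])
        m ltac:(lia)).
      rewrite Nat.ltb_irrefl; auto. }
    set (beta := dot n b b).
    exists (fun j => if Nat.ltb j m then (fun t => a j t - (dot n (a j) (w m) / beta) * b t)
                     else (fun t => b t / beta)).
    split.
    + intros j l Hj Hl. destruct (Nat.ltb_spec j m).
      * rewrite dot_minus_scal_l. destruct (Nat.eq_dec l m).
        -- subst l. rewrite bwm. fold beta.
           destruct (Nat.eqb_spec j m); [lia|]. field. unfold beta; lra.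
        -- rewrite bw by lia. rewrite Hbi by lia. ring.
      * rewrite dot_div_l. assert (j = m) by lia. subst j. destruct (Nat.eq_dec l m).
        -- subst. rewrite bwm, Nat.eqb_refl. fold beta. field; unfold beta; lra.
        -- rewrite bw by lia. destruct (Nat.eqb_spec m l); [lia|]. unfold Rdiv; ring.
    + assert (EP : forall y t, Pm n (fun j => if Nat.ltb j m then (fun t => a j t - (dot n (a j) (w m) / beta) * b t)
                     else (fun t => b t / beta)) w (S m) y t = 1 * P y t + (dot n b y / beta) * b t).
      { intros y t. unfold Pm. simpl. rewrite Nat.ltb_irrefl. rewrite dot_div_l.
        rewrite (rsum_ext _ (fun j => 1 * (dot n (a j) y * w j t) + (- (dot n b y / beta)) * (dot n (a j) (w m) * w j t))).
        rewrite rsum_plus, !rsum_scal. unfold b, P, Pm. ring.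
        intros i Hi. destruct (Nat.ltb_spec i m); [|lia]. rewrite dot_minus_scal_l.
        rewrite (dot_comm n b y). unfold Rdiv. ring. }
      intros y z. rewrite (dot_ext_l n _ (fun t => 1 * P y t + dot n b y / beta * b t)); [|intros; apply EP].
      rewrite (dot_ext_r n y _ (fun t => 1 * P z t + dot n b z / beta * b t)); [|intros; apply EP].
      rewrite dot_lin_l, dot_lin_r. fold P in Hsym. unfold P. rewrite Hsym.
      rewrite (dot_comm n y b). unfold P. unfold Rdiv. change (Pm n a w m) with P. generalize (dot n y (P z)) (dot n b y) (dot n b z) (/ beta). intros. ring.
Qed.
Lemma affine_ay n a v0 : affine n (fun y => dot n a (vsub y v0)).
Proof. eapply affine_ext. 2: apply (affine_plus n _ _ (affine_dot n a) (affine_const n (- dot n a v0))).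
  intros y; simpl. rewrite dot_sub_r. ring. Qed.

Lemma simplex_hrep n T : is_simplex n T -> hrep n T.
Proof. intros [m [v [Hind HT]]].
  set (w := fun l => vsub (v (S l)) (v 0%nat)).
  assert (Hli : lin_indep n m w).
  { intros c Hc l Hl.
    set (c' := fun j => match j with 0%nat => - rsum c m | S l => c l end).
    assert (E := Hind c').
    refine (E _ _ (S l) ltac:(lia)).
    - rewrite rsum_shift. simpl. change (fun i => c i) with c. ring.
    - intros t Ht. rewrite rsum_shift. simpl. specialize (Hc t Ht). unfold w, vsub in Hc.
      rewrite (rsum_ext _ (fun l => c l * v (S l) t + (- v 0%nat t) * c l)) in Hc.
      rewrite rsum_plus, rsum_scal in Hc. lra. intros; ring. }
  destruct (dual_basis n w m Hli) as [a [Hbi _]].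
  set (ay := fun j y => dot n (a j) (vsub y (v 0%nat))).
  apply (hrep_ext n (fun y => (forall j, (j < m)%nat -> 0 <= ay j y) /\
     (0 <= 1 - rsum (fun j => ay j y) m /\
      forall t, (t < n)%nat -> (y t - v 0%nat t) - rsum (fun j => ay j y * w j t) m = 0))).
  2:{ apply hrep_and. apply hrep_forall. intros j Hj. apply hrep_single. apply affine_ay.
      apply hrep_and. apply hrep_single.
      eapply affine_ext. 2:{ apply affine_plus. apply (affine_const n 1).
        apply (affine_scal n (-1) (fun y => rsum (fun j => ay j y) m)).
        apply affine_rsum. intros; apply affine_ay. } intros; simpl; ring.
      apply hrep_forall. intros t Ht. apply hrep_eq.
      eapply affine_ext. 2:{ apply affine_plus. apply affine_plus. apply (affine_coord n t); auto.
        apply (affine_const n (- v 0%nat t)).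
        apply (affine_scal n (-1) (fun y => rsum (fun j => ay j y * w j t) m)).
        apply affine_rsum. intros j Hj.
        eapply affine_ext. 2: apply (affine_scal n (w j t) _ (affine_ay n (a j) (v 0%nat))).
        intros; simpl; unfold ay; ring. } intros; simpl; ring. }
  intros y. rewrite HT. symmetry. split.
  - intros [c [Hc0 [Hc1 Hcy]]].
    assert (Hd : forall t, (t < n)%nat -> vsub y (v 0%nat) t = rsum (fun l => c (S l) * w l t) m).
    { intros t Ht. unfold vsub. rewrite (Hcy t Ht). rewrite rsum_shift in Hc1 |- *. unfold w, vsub.
      rewrite (rsum_ext (fun l => c (S l) * (v (S l) t - v 0%nat t)) (fun l => c (S l) * v (S l) t + (- v 0%nat t) * c (S l))).
      rewrite rsum_plus, rsum_scal. replace (c 0%nat) with (1 - rsum (fun i => c (S i)) m) by lra. ring.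
      intros; ring. }
    assert (Hay : forall j, (j < m)%nat -> ay j y = c (S j)).
    { intros j Hj. unfold ay. rewrite (dot_ext_r n _ _ _ Hd). rewrite dot_rsum_r.
      rewrite <- (rsum_delta (fun l => c (S l)) m j Hj). apply rsum_ext. intros l Hl.
      rewrite Hbi; auto. }
    assert (Hs : rsum (fun j => ay j y) m = rsum (fun j => c (S j)) m) by (apply rsum_ext; auto).
    split; [|split].
    + intros j Hj. rewrite Hay by auto. apply Hc0; lia.
    + rewrite Hs. rewrite rsum_shift in Hc1. pose proof (Hc0 0%nat ltac:(lia)). lra.
    + intros t Ht. rewrite (rsum_ext _ (fun l => c (S l) * w l t)).
      rewrite <- Hd; auto. unfold vsub; ring. intros; rewrite Hay; auto.
  - intros [H1 [H2 H3]].
    exists (fun j => match j with 0%nat => 1 - rsum (fun j => ay j y) m | S l => ay l y end).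
    split; [|split].
    + intros [|j] Hj; [auto | apply H1; lia].
    + rewrite rsum_shift. ring.
    + intros t Ht. rewrite rsum_shift. specialize (H3 t Ht). unfold w, vsub in H3.
      rewrite (rsum_ext _ (fun l => ay l y * v (S l) t + (- v 0%nat t) * ay l y)) in H3.
      rewrite rsum_plus, rsum_scal in H3. lra. intros; ring.
Qed.
Lemma frenet_rec_step n xs x u k : frenet_rec n xs x u k ->
  forall j, (1 <= j <= k)%nat -> frenet_step n xs x u j.
Proof. induction k; simpl; intros H j Hj. lia. destruct H as [H1 H2].
  destruct (Nat.eq_dec j (S k)). subst; auto. apply IHk; auto; lia. Qed.

Lemma lim_ge s l a : Un_cv s l -> (forall i, a <= s i) -> a <= l.
Proof. intros H Hs. destruct (Rle_lt_dec a l); auto.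
  destruct (H (a - l)) as [N HN]; [lra|]. specialize (HN N (le_n _)). specialize (Hs N).
  unfold R_dist in HN. rewrite Rabs_pos_eq in HN by lra. lra. Qed.

Lemma dot_vadd_r n g a b : dot n g (vadd a b) = dot n g a + dot n g b.
Proof. rewrite (dot_ext_r n g (vadd a b) (fun t => 1 * a t + 1 * b t)).
  rewrite dot_lin_r; ring. intros; unfold vadd; ring. Qed.

Lemma dot_vscale_r n g c a : dot n g (vscale c a) = c * dot n g a.
Proof. rewrite (dot_ext_r n g (vscale c a) (fun t => c * a t + 0 * a t)).
  rewrite dot_lin_r; ring. intros; unfold vscale; ring. Qed.

Lemma lex_step n xs x u j g h :
  (forall i, 0 <= dot n g (xs i) + h) -> dot n g x + h = 0 ->
  frenet_step n xs x u j -> (forall l, (1 <= l < j)%nat -> dot n g (u l) = 0) ->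
  0 <= dot n g (u j).
Proof. intros Hpos Hx [Hnz Hcv] Hl.
  apply (lim_ge _ _ 0 (dot_limit n g _ _ Hcv)). intros i.
  rewrite dot_vscale_r. unfold resid. rewrite dot_sub_r.
  unfold proj. rewrite dot_rsum_r. rewrite rsum_zero'.
  2:{ intros l Hl'. rewrite Hl by lia. ring. }
  rewrite dot_sub_r. specialize (Hpos i). specialize (Hnz i).
  assert (0 < norm n (resid n xs x u (j - 1) i)).
  { pose proof (sqrt_pos (dot n (resid n xs x u (j - 1) i) (resid n xs x u (j - 1) i))).
    unfold norm in *. lra. }
  apply Rmult_le_pos. left; apply Rinv_0_lt_compat; auto. lra. Qed.

Lemma choose1 N (c a : nat -> R) : exists lam, 0 < lam /\
  forall q, (q < N)%nat -> 0 < c q -> 0 < c q + lam * a q.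
Proof. induction N.
  - exists 1. split. lra. intros; lia.
  - destruct IHN as [l0 [Hl0 H0]].
    set (l1 := c N / (Rabs (a N) + 1)).
    destruct (Rlt_dec 0 (c N)) as [HcN|HcN].
    + assert (Hl1 : 0 < l1) by (unfold l1; apply Rdiv_lt_0_compat; [lra| pose proof (Rabs_pos (a N)); lra]).
      exists (Rmin l0 l1). split. apply Rmin_glb_lt; auto.
      intros q Hq Hc. pose proof (Rmin_l l0 l1). pose proof (Rmin_r l0 l1).
      pose proof (Rmin_glb_lt l0 l1 0 Hl0 Hl1).
      destruct (Nat.eq_dec q N).
      * subst q. assert (l1 * (Rabs (a N) + 1) = c N) by (unfold l1; field; pose proof (Rabs_pos (a N)); lra).
        pose proof (Rabs_pos (a N)). pose proof (Rle_abs (- a N)). rewrite Rabs_Ropp in *.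
        nra.
      * specialize (H0 q ltac:(lia) Hc). destruct (Rle_dec 0 (a q)); nra.
    + exists l0. split; auto. intros q Hq Hc. destruct (Nat.eq_dec q N). subst; lra.
      apply H0; auto; lia.
Qed.

Lemma chooseK K N : forall (c : nat -> R) (a : nat -> nat -> R),
  (forall q, (q < N)%nat -> 0 <= c q) ->
  (forall q, (q < N)%nat -> c q = 0 -> forall j, (1 <= j <= K)%nat ->
     (forall l, (1 <= l < j)%nat -> a q l = 0) -> 0 <= a q j) ->
  exists lam : nat -> R, (forall j, (1 <= j <= K)%nat -> 0 < lam j) /\
    forall q, (q < N)%nat -> forall j, (j <= K)%nat ->
      0 <= c q + rsum (fun l => lam (S l) * a q (S l)) j.
Proof. induction K; intros c a Hc Hlex.
  - exists (fun _ => 0). split. intros; lia. intros q Hq j Hj. replace j with 0%nat by lia.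
    simpl. specialize (Hc q Hq). lra.
  - destruct (choose1 N c (fun q => a q 1%nat)) as [l1 [Hl1 H1]].
    set (c' := fun q => c q + l1 * a q 1%nat).
    assert (Hc' : forall q, (q < N)%nat -> 0 < c q \/ (c q = 0 /\ 0 <= a q 1%nat)).
    { intros q Hq. destruct (Hc q Hq) as [|E]; [left; auto| right; split; auto].
      apply (Hlex q Hq (eq_sym E) 1%nat ltac:(lia)). intros; lia. }
    destruct (IHK c' (fun q l => a q (S l))) as [lam' [Hp Hs]].
    + intros q Hq. unfold c'. destruct (Hc' q Hq) as [H|[H H']].
      specialize (H1 q Hq H). lra. nra.
    + intros q Hq E j Hj Hl. unfold c' in E. destruct (Hc' q Hq) as [H|[H H']].
      specialize (H1 q Hq H). lra.
      assert (a q 1%nat = 0) by nra.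
      apply (Hlex q Hq H (S j) ltac:(lia)). intros l Hl'. destruct l as [|[|l]]; [lia|auto|].
      apply Hl; lia.
    + exists (fun j => match j with 0%nat => 0 | 1%nat => l1 | S j' => lam' j' end). split.
      * intros [|[|j]] Hj; [lia|auto|]. apply Hp; lia.
      * intros q Hq [|j] Hj. simpl. specialize (Hc q Hq); lra.
        rewrite rsum_shift. specialize (Hs q Hq j ltac:(lia)). unfold c' in Hs.
        replace (rsum (fun i => match S (S i) with 0%nat => 0 | 1%nat => l1 | S j' => lam' j' end * a q (S (S i))) j)
          with (rsum (fun l => lam' (S l) * a q (S (S l))) j) by (apply rsum_ext; auto).
        lra.
Qed.
Theorem theorem3p3 (n : nat) (xs : nat -> vec) (x : vec) (u : nat -> vec) (k : nat)
  (T : vec -> Prop) :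
  (1 <= k)%nat ->
  vconv n xs x ->
  frenet_frame n xs x u k ->
  is_simplex n T ->
  (forall i, T (xs i)) ->
  exists lam : nat -> R,
    (forall j, (1 <= j <= k)%nat -> 0 < lam j) /\
    (forall y, in_conv n k (frame_vertices x lam u) y -> T y).
Proof.
  intros Hk Hcv [_ Hfr] Hs HT.
  destruct (simplex_hrep n T Hs) as [N [phi [Haff Hrep]]].
  assert (Hxs : forall q i, (q < N)%nat -> 0 <= phi q (xs i)).
  { intros q i Hq. apply (proj1 (Hrep (xs i)) (HT i) q Hq). }
  assert (Hc : forall q, (q < N)%nat -> 0 <= phi q x).
  { intros q Hq. destruct (Haff q Hq) as [g [h Hgh]].
    rewrite Hgh. assert (-h <= dot n g x); [|lra].
    apply (lim_ge (fun i => dot n g (xs i)) (dot n g x) (-h) (dot_limit n g xs x Hcv)).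
    intros i. specialize (Hxs q i Hq). rewrite Hgh in Hxs. lra. }
  destruct (chooseK k N (fun q => phi q x) (fun q l => phi q (vadd x (u l)) - phi q x)) as [lam [Hlp Hls]].
  - exact Hc.
  - intros q Hq E j Hj Hl. destruct (Haff q Hq) as [g [h Hgh]].
    rewrite !Hgh in *. rewrite dot_vadd_r.
    assert (0 <= dot n g (u j)); [|lra].
    apply (lex_step n xs x u j g h).
    + intros i. specialize (Hxs q i Hq). rewrite Hgh in Hxs. lra.
    + lra.
    + apply (frenet_rec_step n xs x u k Hfr). lia.
    + intros l Hl'. specialize (Hl l Hl'). rewrite !Hgh, dot_vadd_r in Hl. lra.
  - exists lam. split; auto.
    intros y [c [Hc0 [Hc1 Hcy]]]. apply Hrep. intros q Hq.
    destruct (Haff q Hq) as [g [h Hgh]].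
    rewrite Hgh. rewrite (dot_ext_r n g y _ Hcy). rewrite dot_rsum_r.
    replace h with (rsum c (S k) * h) by (rewrite Hc1; ring).
    rewrite <- rsum_scal_r, <- rsum_plus. apply rsum_nonneg. intros j Hj.
    rewrite <- Rmult_plus_distr_l. apply Rmult_le_pos. apply Hc0; lia.
    specialize (Hls q Hq j ltac:(lia)).
    assert (E : dot n g (frame_vertices x lam u j) =
       dot n g x + rsum (fun l => lam (S l) * dot n g (u (S l))) j).
    { unfold frame_vertices.
      rewrite (dot_ext_r n g _ (fun t => 1 * x t + 1 * rsum (fun l => lam (S l) * u (S l) t) j)).
      rewrite dot_lin_r, (dot_rsum_r n (fun l => lam (S l)) (fun l => u (S l))). ring. intros; ring. }
    rewrite E.
    rewrite (rsum_ext _ (fun l => lam (S l) * dot n g (u (S l)))) in Hls.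
    rewrite Hgh in Hls. lra.
    intros l Hl. rewrite !Hgh, dot_vadd_r. ring.
Qed.
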